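(* There is a family of instances of problem MR, one for each number of jobs $n$, for which $\frac{OPT_{\mathrm{FCFS}}}{OPT}=\Omega(n)$, where $OPT$ is the optimal objective value of MR and $OPT_{\mathrm{FCFS}}$ is the optimal objective value of MR restricted to the FCFS order.
   Context: Problem MR. There are jobs $\mathcal J=\{1,\dots,n\}$ and processors $\mathcal P=\{1,\dots,m\}$. Job $j$ has weight $w_j>0$, release date $r_j\ge0$, and a nonempty set of Map tasks and a nonempty set of Reduce tasks, preassigned to processors with at most one task of each job per processor; $T_{i,j}$ is the task of job $j$ on processor $i$, with work $v_{i,j}\ge0$. A schedule gives each task a start time and a constant speed $s_{i,j}>0$; the task runs non-preemptively for $v_{i,j}/s_{i,j}$ time units and uses energy $v_{i,j}s_{i,j}^{\beta-1}$, where $\beta>1$ is a fixed constant. Feasibility: each processor runs at most one task at a time; tasks of job $j$ start no earlier than $r_j$; Reduce tasks of job $j$ start only after all Map tasks of job $j$ complete; total energy at most a given budget $E>0$. $C_j$ is the maximum completion time of the tasks of job $j$; the objective is to minimize $\sum_j w_jC_j$. Given an order $\sigma$ of the jobs, MR restricted to $\sigma$ is MR with the additional requirement that on every processor the tasks are executed in the order $\sigma$ of their jobs (the same order for all processors). The FCFS order is any order $\sigma$ such that $r_j<r_{j'}$ implies $j$ precedes $j'$. *)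

(* Defs.v *)
From Stdlib Require Import Reals.
From Coquelicot Require Import Coquelicot.
Open Scope R_scope.

Inductive task_kind := MapTask | ReduceTask.

(* An instance of problem MR.  Jobs are 0..njobs-1, processors 0..nprocs-1.
   kind i j = Some k  iff job j has a task T_{i,j} of kind k on processor i. *)
Record instance := mkInstance {
  njobs  : nat;
  nprocs : nat;
  weight : nat -> R;
  release : nat -> R;
  kind   : nat -> nat -> option task_kind;
  work   : nat -> nat -> R;
  budget : R
}.

Definition has_task (I : instance) (i j : nat) : Prop := kind I i j <> None.
Definition is_map (I : instance) (i j : nat) : Prop := kind I i j = Some MapTask.
Definition is_reduce (I : instance) (i j : nat) : Prop := kind I i j = Some ReduceTask.

Definition valid_instance (I : instance) : Prop :=
  (forall j, (j < njobs I)%nat -> 0 < weight I j) /\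
  (forall j, (j < njobs I)%nat -> 0 <= release I j) /\
  (forall i j, (i < nprocs I)%nat -> (j < njobs I)%nat -> has_task I i j -> 0 <= work I i j) /\
  0 < budget I /\
  (forall j, (j < njobs I)%nat ->
     (exists i, (i < nprocs I)%nat /\ is_map I i j) /\
     (exists i, (i < nprocs I)%nat /\ is_reduce I i j)).

Record schedule := mkSchedule { start : nat -> nat -> R; speed : nat -> nat -> R }.

Definition finish (I : instance) (S : schedule) (i j : nat) : R :=
  start S i j + work I i j / speed S i j.

Fixpoint fsum (n : nat) (f : nat -> R) : R :=
  match n with O => 0 | S k => fsum k f + f k end.

Definition energy (I : instance) (beta : R) (S : schedule) : R :=
  fsum (nprocs I) (fun i => fsum (njobs I) (fun j =>
    match kind I i j with
    | Some _ => work I i j * Rpower (speed S i j) (beta - 1)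
    | None => 0
    end)).

(* The max is computed with a
   fold starting at 0; since every job has a task and, in a feasible schedule,
   every completion time is >= r_j >= 0, this equals the true maximum. *)
Fixpoint max_finish_upto (I : instance) (S : schedule) (j k : nat) : R :=
  match k with
  | O => 0
  | S k' => match kind I k' j with
            | Some _ => Rmax (max_finish_upto I S j k') (finish I S k' j)
            | None => max_finish_upto I S j k'
            end
  end.

Definition completion (I : instance) (S : schedule) (j : nat) : R :=
  max_finish_upto I S j (nprocs I).

Definition objective (I : instance) (S : schedule) : R :=
  fsum (njobs I) (fun j => weight I j * completion I S j).

Definition feasible (I : instance) (beta : R) (S : schedule) : Prop :=
  (forall i j, (i < nprocs I)%nat -> (j < njobs I)%nat -> has_task I i j ->
     0 < speed S i j /\ release I j <= start S i j) /\
  (forall i j j', (i < nprocs I)%nat -> (j < njobs I)%nat -> (j' < njobs I)%nat ->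
     j <> j' -> has_task I i j -> has_task I i j' ->
     finish I S i j <= start S i j' \/ finish I S i j' <= start S i j) /\
  (forall i i' j, (i < nprocs I)%nat -> (i' < nprocs I)%nat -> (j < njobs I)%nat ->
     is_map I i j -> is_reduce I i' j -> finish I S i j <= start S i' j) /\
  energy I beta S <= budget I.

(* An order of the jobs, given by the position pos j in {0..n-1} of each job j
   (a bijection of {0..n-1}). *)
Definition is_order (n : nat) (pos : nat -> nat) : Prop :=
  (forall j, (j < n)%nat -> (pos j < n)%nat) /\
  (forall j j', (j < n)%nat -> (j' < n)%nat -> pos j = pos j' -> j = j').

Definition respects_order (I : instance) (pos : nat -> nat) (S : schedule) : Prop :=
  forall i j j', (i < nprocs I)%nat -> (j < njobs I)%nat -> (j' < njobs I)%nat ->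
    has_task I i j -> has_task I i j' -> (pos j < pos j')%nat ->
    finish I S i j <= start S i j'.

Definition is_FCFS_order (I : instance) (pos : nat -> nat) : Prop :=
  is_order (njobs I) pos /\
  forall j j', (j < njobs I)%nat -> (j' < njobs I)%nat ->
    release I j < release I j' -> (pos j < pos j')%nat.

Definition OPT (I : instance) (beta : R) : Rbar :=
  Glb_Rbar (fun x => exists S, feasible I beta S /\ x = objective I S).

Definition OPT_order (I : instance) (beta : R) (pos : nat -> nat) : Rbar :=
  Glb_Rbar (fun x => exists S, feasible I beta S /\ respects_order I pos S /\
                               x = objective I S).

(* Main.v *)
Require Import Defs.
From Stdlib Require Import Reals Lra Lia FunctionalExtensionality.
From Coquelicot Require Import Coquelicot.
Open Scope R_scope.

Lemma fsum_nonneg n f : (forall k, (k<n)%nat -> 0 <= f k) -> 0 <= fsum n f.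
Proof. induction n; intros H; simpl; [lra|].
  assert (0 <= fsum n f) by (apply IHn; intros; apply H; lia).
  assert (0 <= f n) by (apply H; lia). lra. Qed.

Lemma fsum_ge_term n f k : (forall k, (k<n)%nat -> 0 <= f k) -> (k<n)%nat -> f k <= fsum n f.
Proof. induction n; intros H Hk; simpl; [lia|].
  destruct (Nat.eq_dec k n) as [->|Hne].
  - assert (0 <= fsum n f) by (apply fsum_nonneg; intros; apply H; lia). lra.
  - assert (f k <= fsum n f) by (apply IHn; [intros; apply H; lia| lia]).
    assert (0 <= f n) by (apply H; lia). lra. Qed.

Lemma fsum_ge_pred n f : 0 <= f 0%nat -> (forall k, (1<=k<n)%nat -> 1 <= f k) ->
  INR n - 1 <= fsum n f.
Proof. intros H0 H. induction n; simpl fsum.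
  - simpl; lra.
  - destruct n.
    + simpl. lra.
    + assert (INR (S n) - 1 <= fsum (S n) f) by (apply IHn; intros; apply H; lia).
      assert (1 <= f (S n)) by (apply H; lia). rewrite S_INR. lra. Qed.

Lemma fsum_le n f g : (forall k, (k<n)%nat -> f k <= g k) -> fsum n f <= fsum n g.
Proof. induction n; intros H; simpl; [lra|].
  assert (fsum n f <= fsum n g) by (apply IHn; intros; apply H; lia).
  assert (f n <= g n) by (apply H; lia). lra. Qed.

Lemma fsum_zero n : fsum n (fun _ => 0) = 0.
Proof. induction n; simpl; [|rewrite IHn]; lra. Qed.

Lemma fsum_ind0 n : fsum n (fun j => match j with O => 1 | S _ => 0 end) <= 1.
Proof. induction n; simpl; [lra|]. destruct n; simpl in *; lra. Qed.

Lemma fsum_h n r : fsum (S n) (fun j => match j with O => r + 1 | S _ => r end) = r + 1 + INR n * r.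
Proof. induction n. simpl; lra. change (fsum (S (S n)) ?f) with (fsum (S n) f + f (S n)).
  rewrite IHn, S_INR. simpl. lra. Qed.

Lemma glb_finite (E : R -> Prop) L x0 : E x0 -> (forall x, E x -> L <= x) ->
  exists g, Glb_Rbar E = Finite g /\ L <= g /\ g <= x0.
Proof. intros Hx HL. destruct (Glb_Rbar_correct E) as [Hlb Hglb].
  specialize (Hglb (Finite L) HL). specialize (Hlb x0 Hx).
  destruct (Glb_Rbar E); simpl in *; try contradiction. eauto. Qed.

Lemma glb_ge (E : R -> Prop) L : (forall x, E x -> L <= x) -> Rbar_le (Finite L) (Glb_Rbar E).
Proof. intros HL. destruct (Glb_Rbar_correct E) as [_ Hglb]. apply Hglb. exact HL. Qed.

Lemma rpower_le1 s y : 0 < s -> 0 < y -> Rpower s y <= 1 -> s <= 1.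
Proof. intros Hs Hy H. destruct (Rle_lt_dec s 1) as [|Hlt]; auto.
  exfalso. unfold Rpower in H. pose proof (ln_increasing 1 s ltac:(lra) Hlt) as Hl.
  rewrite ln_1 in Hl. pose proof (exp_increasing 0 (y * ln s) ltac:(nra)). rewrite exp_0 in H0. lra. Qed.

Lemma rpower_pos s y : 0 < Rpower s y.
Proof. unfold Rpower. apply exp_pos. Qed.

Lemma rpower_1 y : Rpower 1 y = 1.
Proof. unfold Rpower. rewrite ln_1, Rmult_0_r, exp_0. reflexivity. Qed.
Definition inst (n : nat) : instance :=
  mkInstance n 2 (fun _ => 1)
    (fun j => match j with O => 0 | S _ => / INR n end)
    (fun i _ => match i with O => Some MapTask | S O => Some ReduceTask | _ => None end)
    (fun i j => match i, j with O, O => 1 | _, _ => 0 end) 1.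

Definition S0 (n : nat) : schedule :=
  mkSchedule (fun i j => match i, j with S O, O => / INR n + 1 | _, _ => / INR n end)
             (fun _ _ => 1).

Lemma completion_eq n S j : completion (inst n) S j =
  Rmax (Rmax 0 (finish (inst n) S 0 j)) (finish (inst n) S 1 j).
Proof. reflexivity. Qed.

Lemma work_nonneg n i j : 0 <= work (inst n) i j.
Proof. destruct i, j; simpl; try lra; destruct i; lra. Qed.

Lemma obj_nonneg n S : feasible (inst n) 1 S -> True. Proof. auto. Qed.

Lemma compl_ge n S j : finish (inst n) S 0 j <= completion (inst n) S j /\ 0 <= completion (inst n) S j.
Proof. rewrite completion_eq. pose proof (Rmax_l 0 (finish (inst n) S 0 j)).
  pose proof (Rmax_r 0 (finish (inst n) S 0 j)).
  pose proof (Rmax_l (Rmax 0 (finish (inst n) S 0 j)) (finish (inst n) S 1 j)). lra. Qed.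

Lemma valid_inst n : (2 <= n)%nat -> valid_instance (inst n).
Proof. intros Hn. assert (0 < INR n) by (apply lt_0_INR; lia).
  repeat split; simpl; intros; try lra.
  - destruct j; [lra|]. left; apply Rinv_0_lt_compat; lra.
  - apply (work_nonneg n).
  - exists 0%nat; split; [lia|reflexivity].
  - exists 1%nat; split; [lia|reflexivity]. Qed.

Lemma S0_feasible n beta : (2 <= n)%nat -> feasible (inst n) beta (S0 n).
Proof. intros Hn. assert (0 < INR n) by (apply lt_0_INR; lia).
  assert (0 < / INR n) by (apply Rinv_0_lt_compat; lra).
  unfold feasible, finish, is_map, is_reduce; simpl.
  repeat split; intros.
  - lra.
  - destruct i as [|[|i]]; destruct j; simpl; unfold Rdiv; rewrite ?Rinv_1, ?Rmult_1_r, ?Rmult_0_l; lra.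
  - destruct i as [|[|i]]; [| |lia]; destruct j, j'; simpl;
      unfold Rdiv; rewrite ?Rinv_1, ?Rmult_1_r, ?Rmult_0_l; first [congruence | left; lra | right; lra].
  - destruct i as [|[|i]]; destruct i' as [|[|i']]; simpl in *; try discriminate; try lia;
      destruct j; unfold Rdiv; rewrite ?Rinv_1, ?Rmult_1_r, ?Rmult_0_l; lra.
  - unfold energy. simpl. rewrite rpower_1.
    assert (fsum n (fun j => match j with O => 1 | S _ => 0 end * 1) <= 1).
    { eapply Rle_trans; [|apply (fsum_ind0 n)]. apply fsum_le. intros k _; destruct k; lra. }
    replace (fun _ : nat => 0 * 1) with (fun _ : nat => 0) by (apply functional_extensionality; intros; lra).
    rewrite fsum_zero. lra.
Qed.

Lemma obj_S0 n : (2 <= n)%nat -> objective (inst n) (S0 n) <= 2.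
Proof. intros Hn. assert (0 < INR n) by (apply lt_0_INR; lia).
  assert (0 < / INR n) by (apply Rinv_0_lt_compat; lra).
  unfold objective.
  eapply Rle_trans.
  { apply (fsum_le _ _ (fun j => match j with O => / INR n + 1 | S _ => / INR n end)).
    intros k _. rewrite completion_eq. unfold finish; simpl.
    unfold Rdiv; rewrite ?Rinv_1, ?Rmult_1_r, ?Rmult_0_l, ?Rmult_1_l.
    destruct k; repeat apply Rmax_lub; lra. }
  destruct n as [|k]; [lia|]. change (njobs (inst (S k))) with (S k). rewrite fsum_h.
  rewrite S_INR in *. replace (INR k * / (INR k + 1)) with (1 - / (INR k + 1)) by (field; lra).
  lra.
Qed.

Lemma obj_lb_all n S : (2 <= n)%nat -> feasible (inst n) 1 S -> True.
Proof. auto. Qed.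

Lemma obj_pos n beta S : (2 <= n)%nat -> feasible (inst n) beta S -> / INR n <= objective (inst n) S.
Proof. intros Hn [Hsp _].
  unfold objective. eapply Rle_trans; [| apply (fsum_ge_term _ _ 1%nat)].
  - simpl. destruct (compl_ge n S 1) as [H1 _].
    destruct (Hsp 0%nat 1%nat ltac:(simpl;lia) ltac:(simpl;lia) ltac:(simpl; discriminate)) as [Hs Hr].
    simpl in Hr. unfold finish in H1. simpl in H1. unfold Rdiv in H1. rewrite Rmult_0_l in H1. lra.
  - intros k _. destruct (compl_ge n S k). simpl. lra.
  - simpl. lia.
Qed.

Lemma obj_order n beta Sc pos : (2 <= n)%nat -> 1 < beta -> feasible (inst n) beta Sc ->
  respects_order (inst n) pos Sc -> is_FCFS_order (inst n) pos ->
  INR n - 1 <= objective (inst n) Sc.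
Proof. intros Hn Hb [Hsp [_ [_ Hen]]] Hro [_ Hfc].
  assert (0 < INR n) by (apply lt_0_INR; lia).
  assert (0 < / INR n) by (apply Rinv_0_lt_compat; lra).
  destruct (Hsp 0%nat 0%nat ltac:(simpl;lia) ltac:(simpl;lia) ltac:(simpl; discriminate)) as [Hs0 Hr0].
  simpl in Hr0.
  assert (HE : Rpower (speed Sc 0 0) (beta - 1) <= 1).
  { unfold energy in Hen. simpl in Hen.
    eapply Rle_trans; [| exact Hen].
    assert (Hin : forall i, 0 <= fsum n (fun j => match kind (inst n) i j with
        | Some _ => work (inst n) i j * Rpower (speed Sc i j) (beta - 1) | None => 0 end)).
    { intros i. apply fsum_nonneg. intros k _. destruct (kind (inst n) i k); [|lra].
      pose proof (work_nonneg n i k). pose proof (rpower_pos (speed Sc i k) (beta - 1)). nra. }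
    pose proof (Hin 1%nat) as H1.
    pose proof (fsum_ge_term n (fun j => match kind (inst n) 0 j with
        | Some _ => work (inst n) 0 j * Rpower (speed Sc 0 j) (beta - 1) | None => 0 end) 0%nat) as H2.
    simpl in H2, H1.
    assert (Rpower (speed Sc 0 0) (beta - 1) <= fsum n (fun j =>
       match j with O => 1 | S _ => 0 end * Rpower (speed Sc 0 j) (beta - 1))).
    { replace (Rpower (speed Sc 0 0) (beta - 1)) with (1 * Rpower (speed Sc 0 0) (beta - 1)) by ring.
      apply H2; [|lia]. intros k _. pose proof (rpower_pos (speed Sc 0 k) (beta - 1)). destruct k; nra. }
    lra. }
  assert (Hs1 : speed Sc 0 0 <= 1) by (apply (rpower_le1 _ (beta - 1)); lra).
  assert (Hf : 1 <= finish (inst n) Sc 0 0).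
  { unfold finish. simpl. assert (1 <= 1 / speed Sc 0 0).
    { apply (Rmult_le_reg_l (speed Sc 0 0)); [lra|]. field_simplify; lra. }
    lra. }
  unfold objective. apply fsum_ge_pred.
  - destruct (compl_ge n Sc 0). cbv beta. change (weight (inst n) 0) with 1. lra.
  - intros k Hk. simpl in Hk. destruct k as [|k]; [lia|].
    assert (Hp : (pos 0 < pos (S k))%nat) by (apply Hfc; simpl; try lia; lra).
    pose proof (Hro 0%nat 0%nat (S k) ltac:(simpl;lia) ltac:(simpl;lia) ltac:(simpl;lia)
      ltac:(unfold has_task; simpl; discriminate) ltac:(unfold has_task; simpl; discriminate) Hp).
    destruct (compl_ge n Sc (S k)) as [Hc _]. unfold finish in Hc at 1. simpl in Hc.
    unfold Rdiv in Hc. rewrite Rmult_0_l in Hc. cbv beta. change (weight (inst n) (S k)) with 1. lra.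
Qed.

Theorem proposition3 :
  forall beta : R, 1 < beta ->
  exists c : R, 0 < c /\
  exists N : nat, forall n : nat, (N <= n)%nat ->
    exists I : instance,
      valid_instance I /\ njobs I = n /\
      exists opt : R, OPT I beta = Finite opt /\ 0 < opt /\
      forall pos : nat -> nat, is_FCFS_order I pos ->
        Rbar_le (Finite (c * INR n * opt)) (OPT_order I beta pos).
Proof.
  intros beta Hb. exists (1/4). split; [lra|]. exists 2%nat. intros n Hn.
  exists (inst n). split; [apply valid_inst; exact Hn|]. split; [reflexivity|].
  assert (H2 : 2 <= INR n) by (apply (le_INR 2 n) in Hn; simpl in Hn; lra).
  assert (0 < / INR n) by (apply Rinv_0_lt_compat; lra).
  destruct (glb_finite (fun x => exists S, feasible (inst n) beta S /\ x = objective (inst n) S)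
     (/ INR n) (objective (inst n) (S0 n))) as [opt [Hopt [Hlo Hhi]]].
  - exists (S0 n). split; [apply S0_feasible; exact Hn| reflexivity].
  - intros x [S [HS ->]]. eapply obj_pos; eauto.
  - exists opt. split; [exact Hopt|]. split; [lra|].
    pose proof (obj_S0 n Hn).
    intros pos Hpos. apply glb_ge. intros x [S [HS [Hro ->]]].
    pose proof (obj_order n beta S pos Hn Hb HS Hro Hpos).
    assert (1/4 * INR n * opt <= 1/4 * INR n * 2).
    { apply Rmult_le_compat_l; lra. }
    lra.
Qed.
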